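(* Let $G$ and $H$ be non-empty locally finite graphs. If $N(G)\cong N(H)$ as simplicial complexes, then $K_2\times G$ and $K_2\times H$ are $\times$-homotopy equivalent.
   Context: A graph $G$ is a set $V(G)$ with a symmetric subset $E(G)\subset V(G)\times V(G)$ (loops allowed); $N(v)=\{w:(v,w)\in E(G)\}$; $G$ is locally finite if every $N(v)$ is finite. The neighborhood complex $N(G)$ is the simplicial complex whose vertices are the non-isolated vertices of $G$ and whose simplices are the finite subsets contained in some $N(v)$. $K_2\times G$ has vertex set $\{1,2\}\times V(G)$, $((i,x),(j,y))$ an edge iff $i\neq j$ and $(x,y)\in E(G)$. For $n\ge0$, $I_n$ is the graph with vertices $\{0,\dots,n\}$ and edges $(x,y)$ with $|x-y|\le1$ (so with loops). Graph homomorphisms $f,g:G\to H$ are $\times$-homotopic if for some $n\ge0$ there is a graph homomorphism $K:G\times I_n\to H$ (tensor product: $((x,i),(x',j))$ an edge iff $(x,x')\in E(G)$ and $|i-j|\le1$) with $K(x,0)=f(x)$ and $K(x,n)=g(x)$; this generates an equivalence relation $\simeq_\times$. $f:G\to H$ is a $\times$-homotopy equivalence if there is $h:H\to G$ with $hf\simeq_\times\mathrm{id}_G$ and $fh\simeq_\times\mathrm{id}_H$. *)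

(* Defs.v *)
From Stdlib Require Import List Arith Relations.
Import ListNotations.

Record graph := Graph {
  V : Type;
  E : V -> V -> Prop;
  E_sym : forall x y, E x y -> E y x
}.

Definition locally_finite (G : graph) : Prop :=
  forall v : V G, exists l : list (V G), forall w, E G v w -> In w l.

Definition nonempty_graph (G : graph) : Prop := inhabited (V G).

(* Vertices of the neighborhood complex: non-isolated vertices. *)
Definition nonisolated (G : graph) (v : V G) : Prop := exists w, E G v w.

Definition NVert (G : graph) : Type := { v : V G | nonisolated G v }.

Definition N_simplex (G : graph) (s : list (NVert G)) : Prop :=
  exists v : V G, forall x, In x s -> E G v (proj1_sig x).

Definition N_iso (G H : graph) : Prop :=
  exists (f : NVert G -> NVert H) (g : NVert H -> NVert G),
    (forall x, g (f x) = x) /\ (forall y, f (g y) = y) /\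
    (forall s : list (NVert G), N_simplex G s <-> N_simplex H (map f s)).

Definition K2x (G : graph) : graph.
Proof.
  refine (Graph (bool * V G)
            (fun p q => fst p <> fst q /\ E G (snd p) (snd q)) _).
  intros [i x] [j y] [H1 H2]; simpl in *; split.
  - intro e; apply H1; symmetry; exact e.
  - apply E_sym; exact H2.
Defined.

Definition is_hom (G H : graph) (f : V G -> V H) : Prop :=
  forall x y, E G x y -> E H (f x) (f y).

(* One-step x-homotopy: a homomorphism K : G x I_n -> H with K(-,0)=f,
   K(-,n)=g. The vertex (x,i) of G x I_n (0<=i<=n) is sent to K x i. *)
Definition xhomotopic_step (G H : graph) (f g : V G -> V H) : Prop :=
  exists (n : nat) (K : V G -> nat -> V H),
    (forall x x' i j, i <= n -> j <= n -> E G x x' ->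
        (i <= j + 1 /\ j <= i + 1) -> E H (K x i) (K x' j)) /\
    (forall x, K x 0 = f x) /\ (forall x, K x n = g x).

Definition xhomotopic (G H : graph) : (V G -> V H) -> (V G -> V H) -> Prop :=
  clos_refl_sym_trans _ (xhomotopic_step G H).

Definition xhomotopy_equivalent (G H : graph) : Prop :=
  exists (f : V G -> V H) (h : V H -> V G),
    is_hom G H f /\ is_hom H G h /\
    xhomotopic G G (fun x => h (f x)) (fun x => x) /\
    xhomotopic H H (fun y => f (h y)) (fun y => y).

(* Main.v *)
Require Import Defs.
From Stdlib Require Import List Arith Relations.
From Stdlib Require Import Classical ClassicalEpsilon ProofIrrelevance Lia.
Import ListNotations.

Lemma sig_pi (G : graph) (x : NVert G) (q : nonisolated G (proj1_sig x)) :
  x = exist _ (proj1_sig x) q.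
Proof. destruct x as [x p]; simpl in *; f_equal; apply proof_irrelevance. Qed.

Lemma build_list (G : graph) (y : V G) (l : list (V G)) :
  exists s : list (NVert G), (forall x, In x s -> E G y (proj1_sig x)) /\
    (forall w, E G y w -> In w l -> exists x, In x s /\ proj1_sig x = w).
Proof.
  induction l as [|a l [s [H1 H2]]].
  - exists []; split; simpl; tauto.
  - destruct (classic (E G y a)) as [Ha|Ha].
    + assert (q : nonisolated G a) by (exists y; apply E_sym; exact Ha).
      exists (exist _ a q :: s); split.
      * intros x [<-|Hx]; auto.
      * intros w Hw [Ew|Hw']. subst w. exists (exist _ a q); simpl; auto.
        destruct (H2 w Hw Hw') as [x [Hx Hx']]; exists x; simpl; auto.
    + exists s; split; auto.
      intros w Hw [Ew|Hw']; [subst w; contradiction|auto].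
Qed.

Lemma data (G H : graph) (phi : NVert G -> NVert H) :
  (forall s, N_simplex G s -> N_simplex H (map phi s)) -> locally_finite G ->
  exists c : V G -> V H, forall y x (p : nonisolated G x), E G y x ->
     E H (c y) (proj1_sig (phi (exist _ x p))).
Proof.
  intros Hs Hlf.
  assert (Hex : forall y, exists w, forall x (p : nonisolated G x), E G y x ->
     E H w (proj1_sig (phi (exist _ x p)))).
  { intro y. destruct (Hlf y) as [l Hl].
    destruct (build_list G y l) as [s [H1 H2]].
    destruct (Hs s (ex_intro _ y H1)) as [w Hw].
    exists w. intros x p Hyx.
    destruct (H2 x Hyx (Hl x Hyx)) as [z [Hz Hz']].
    subst x. rewrite <- sig_pi. apply Hw. apply in_map; auto. }
  exists (fun y => proj1_sig (constructive_indefinite_description _ (Hex y))).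
  intros y x p Hyx.
  destruct (constructive_indefinite_description _ (Hex y)) as [w Hw]; simpl; auto.
Qed.

Definition F0 (G H : graph) (phi : NVert G -> NVert H) (c : V G -> V H) (x : V G) : V H :=
  match excluded_middle_informative (nonisolated G x) with
  | left p => proj1_sig (phi (exist _ x p))
  | right _ => c x end.

Lemma F0_eq G H phi c x (p : nonisolated G x) :
  F0 G H phi c x = proj1_sig (phi (exist _ x p)).
Proof.
  unfold F0; destruct (excluded_middle_informative _) as [q|q]; [|contradiction].
  do 3 f_equal; apply proof_irrelevance.
Qed.

Definition fK (G H : graph) (F c : V G -> V H) (v : V (K2x G)) : V (K2x H) :=
  let (b, x) := v in if b then (true, F x) else (false, c x).

Lemma fK_hom G H F c :
  (forall y x, E G y x -> E H (c y) (F x)) -> is_hom (K2x G) (K2x H) (fK G H F c).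
Proof.
  intros Hc [b x] [b' y] [Hb Hxy]; simpl in *.
  destruct b, b'; simpl; try (exfalso; apply Hb; reflexivity); split; try discriminate.
  - apply E_sym, Hc, E_sym, Hxy.
  - apply Hc, Hxy.
Qed.

Lemma step_lemma (A B : graph) (f g : V A -> V B) :
  is_hom A B f -> is_hom A B g -> (forall x x', E A x x' -> E B (f x) (g x')) ->
  xhomotopic A B f g.
Proof.
  intros Hf Hg Hc. apply rst_step.
  exists 1, (fun x i => match i with 0 => f x | _ => g x end).
  split; [|split; intros; reflexivity].
  intros x x' i j Hi Hj Hxx' _.
  destruct i as [|[|i]], j as [|[|j]]; try lia; auto.
  apply E_sym, Hc, E_sym, Hxx'.
Qed.

Lemma main_abs (G H : graph) (F c : V G -> V H) (G0 d : V H -> V G) :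
  (forall y x, E G y x -> E H (c y) (F x)) ->
  (forall w u, E H w u -> E G (d w) (G0 u)) ->
  (forall x, nonisolated G x -> G0 (F x) = x) ->
  (forall u, nonisolated H u -> F (G0 u) = u) ->
  xhomotopy_equivalent (K2x G) (K2x H).
Proof.
  intros Hc Hd H3 H4.
  exists (fK G H F c), (fK H G G0 d).
  pose proof (fK_hom G H F c Hc) as Hf. pose proof (fK_hom H G G0 d Hd) as Hh.
  split; [exact Hf|split; [exact Hh|split]].
  - apply step_lemma.
    + intros x y e; apply Hh, Hf, e.
    + intros x y e; exact e.
    + intros [b x] [b' y] [Hb Hxy]; simpl in *.
      destruct b, b'; simpl; try (exfalso; apply Hb; reflexivity); split; try discriminate.
      * rewrite H3; [exact Hxy|exists y; exact Hxy].
      * rewrite <- (H3 y) by (exists x; apply E_sym, Hxy). apply Hd, Hc, Hxy.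
  - apply step_lemma.
    + intros x y e; apply Hf, Hh, e.
    + intros x y e; exact e.
    + intros [b x] [b' y] [Hb Hxy]; simpl in *.
      destruct b, b'; simpl; try (exfalso; apply Hb; reflexivity); split; try discriminate.
      * rewrite H4; [exact Hxy|exists y; exact Hxy].
      * rewrite <- (H4 y) by (exists x; apply E_sym, Hxy). apply Hc, Hd, Hxy.
Qed.

Theorem proposition4p10 (G H : graph) :
  nonempty_graph G -> nonempty_graph H ->
  locally_finite G -> locally_finite H ->
  N_iso G H ->
  xhomotopy_equivalent (K2x G) (K2x H).
Proof.
  intros _ _ HlG HlH [phi [psi [Hpf [Hfp Hs]]]].
  assert (Hs2 : forall t, N_simplex H t -> N_simplex G (map psi t)).
  { intros t Ht. apply Hs. rewrite map_map.
    replace (map (fun x => phi (psi x)) t) with t; auto.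
    rewrite <- (map_id t) at 1. apply map_ext. intro; symmetry; auto. }
  destruct (data G H phi (fun s => proj1 (Hs s)) HlG) as [c Hc].
  destruct (data H G psi Hs2 HlH) as [d Hd].
  apply (main_abs G H (F0 G H phi c) c (F0 H G psi d) d).
  - intros y x e. rewrite (F0_eq _ _ _ _ x (ex_intro _ y (E_sym _ _ _ e))). apply Hc, e.
  - intros y x e. rewrite (F0_eq _ _ _ _ x (ex_intro _ y (E_sym _ _ _ e))). apply Hd, e.
  - intros x p. rewrite (F0_eq _ _ _ _ x p).
    rewrite (F0_eq _ _ _ _ _ (proj2_sig (phi (exist _ x p)))).
    rewrite <- sig_pi, Hpf; reflexivity.
  - intros x p. rewrite (F0_eq _ _ _ _ x p).
    rewrite (F0_eq _ _ _ _ _ (proj2_sig (psi (exist _ x p)))).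
    rewrite <- sig_pi, Hfp; reflexivity.
Qed.
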